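(* For every integer $n\ge 3$, the polytope $\operatorname{conv}\phi_n$ is not 3-neighborly; that is, there exist three vertices of $\operatorname{conv}\phi_n$ whose convex hull is not a face of $\operatorname{conv}\phi_n$. (For $n=3$, the sum of the three elements of $\phi_3$ corresponding to the three cyclic permutations (including the identity) equals the sum of the three elements corresponding to the three transpositions.)
   Context: For $n\ge 3$, $\phi_n$ is the set of $\binom{n}{2}\times\binom{n}{2}$ permutation matrices of the edges of the complete graph $K_n$ induced by permutations of its vertices: for a permutation $\sigma$ of $[n]$, the associated vector $\bm{z}\in\{0,1\}^{\binom{n}{2}\times\binom{n}{2}}$ has coordinates $z_{ijkl}$, $i,j,k,l\in[n]$, $i<j$, $k<l$, with $z_{ijkl}=1$ iff $\{\sigma(i),\sigma(j)\}=\{k,l\}$, and $0$ otherwise. All elements of $\phi_n$ are vertices of $\operatorname{conv}\phi_n$. A polytope is $k$-neighborly if every set of at most $k$ of its vertices is the vertex set of a face. *)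

(* Defs.v *)
From HB Require Import structures.
From mathcomp Require Import all_boot all_order all_fingroup all_algebra.
Unset Printing Implicit Defensive.
Import Order.TTheory GRing.Theory Num.Theory.
Local Open Scope ring_scope.

(* Edges {i,j} of K_n, encoded as pairs (i,j) with i < j. *)
Definition edge (n : nat) := {p : 'I_n * 'I_n | (p.1 < p.2)%N}.

(* Coordinates z_{ijkl}: pairs (edge ij, edge kl). *)
Definition coord (n : nat) := (edge n * edge n)%type.

Notation space R n := {ffun coord n -> R}.

(* The element of phi_n associated to a vertex permutation sigma:
   z_{ijkl} = 1 iff {sigma i, sigma j} = {k, l}. *)
Definition zvec (R : realFieldType) (n : nat) (s : {perm 'I_n}) : space R n :=
  [ffun t : coord n =>
     let e := val t.1 in let f := val t.2 in
     if [set s e.1; s e.2] == [set f.1; f.2] then 1 else 0].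

Definition dotp (R : realFieldType) (n : nat) (c x : space R n) : R :=
  \sum_(t : coord n) c t * x t.

Definition conv (R : realFieldType) (n : nat) (I : finType) (f : I -> space R n)
  (x : space R n) : Prop :=
  exists lam : I -> R,
    [/\ forall i, 0 <= lam i, \sum_i lam i = 1 & forall t, x t = \sum_i lam i * f i t].

Definition convphi (R : realFieldType) (n : nat) : space R n -> Prop :=
  conv R n {perm 'I_n} (fun s : {perm 'I_n} => zvec R n s).

(* F is a face of P: F = P ∩ H for a hyperplane H = {c.x = d} with P ⊆ {c.x <= d}
   (c = 0 allowed, giving the empty face and P itself). *)
Definition is_face (R : realFieldType) (n : nat) (P F : space R n -> Prop) : Prop :=
  exists (c : space R n) (d : R),
    (forall x, P x -> dotp R n c x <= d) /\
    (forall x, F x <-> (P x /\ dotp R n c x = d)).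

(* Main.v *)
Require Import Defs.
From HB Require Import structures.
From mathcomp Require Import all_boot all_order all_fingroup all_algebra.
From mathcomp Require Import ring lra.
Import Order.TTheory GRing.Theory Num.Theory.
Local Open Scope ring_scope.

Definition a0 m : 'I_m.+3 := inord 0.
Definition a1 m : 'I_m.+3 := inord 1.
Definition a2 m : 'I_m.+3 := inord 2.
Lemma va0 m : nat_of_ord (a0 m) = 0%N. Proof. by rewrite /a0 inordK. Qed.
Lemma va1 m : nat_of_ord (a1 m) = 1%N. Proof. by rewrite /a1 inordK. Qed.
Lemma va2 m : nat_of_ord (a2 m) = 2%N. Proof. by rewrite /a2 inordK. Qed.
Lemma e01 m : (a0 m == a1 m) = false.
Proof. by rewrite -(inj_eq val_inj) /= va0 va1. Qed.
Lemma e02 m : (a0 m == a2 m) = false.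
Proof. by rewrite -(inj_eq val_inj) /= va0 va2. Qed.
Lemma e12 m : (a1 m == a2 m) = false.
Proof. by rewrite -(inj_eq val_inj) /= va1 va2. Qed.
Lemma e10 m : (a1 m == a0 m) = false.
Proof. by rewrite -(inj_eq val_inj) /= va1 va0. Qed.
Lemma e20 m : (a2 m == a0 m) = false.
Proof. by rewrite -(inj_eq val_inj) /= va2 va0. Qed.
Lemma e21 m : (a2 m == a1 m) = false.
Proof. by rewrite -(inj_eq val_inj) /= va2 va1. Qed.


Definition t01 m : {perm 'I_m.+3} := tperm (a0 m) (a1 m).
Definition t12 m : {perm 'I_m.+3} := tperm (a1 m) (a2 m).
Definition t02 m : {perm 'I_m.+3} := tperm (a0 m) (a2 m).
Definition cy m : {perm 'I_m.+3} := t01 m * t12 m.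
Definition cy2 m : {perm 'I_m.+3} := t12 m * t01 m.

Lemma tpE (T : finType) (x y z : T) : tperm x y z = if z == x then y else if z == y then x else z.
Proof.
case: eqP => [->|/eqP h]; first by rewrite tpermL.
case: eqP => [->|/eqP h']; first by rewrite tpermR.
by rewrite tpermD // eq_sym.
Qed.

Ltac evp := rewrite /cy /cy2 /t01 /t12 /t02 ?permM ?perm1 ?tpE.

Lemma nea m (j : 'I_m.+3) : (3 <= val j)%N ->
  [/\ (j == a0 m) = false, (j == a1 m) = false & (j == a2 m) = false].
Proof.
move=> hj; split; apply/negbTE; apply/eqP => e; move: hj; by rewrite e /= ?va0 ?va1 ?va2.
Qed.

Lemma fix_out m (j : 'I_m.+3) (s : {perm 'I_m.+3}) :
  (3 <= val j)%N -> s \in [:: 1%g; cy m; cy2 m; t01 m; t12 m; t02 m] -> s j = j.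
Proof.
move=> /nea [h0 h1 h2].
rewrite !inE => /orP[/eqP->|/orP[/eqP->|/orP[/eqP->|/orP[/eqP->|/orP[/eqP->|/eqP->]]]]]. all: evp. all: by rewrite ?h0 ?h1 ?h2 ?tpE ?h0 ?h1 ?h2.
Qed.


Lemma in3 m (i : 'I_m.+3) : (val i < 3)%N -> [\/ i = a0 m, i = a1 m | i = a2 m].
Proof.
move=> h; case: i h => [[|[|[|k]]] hk] //= _.
- by constructor 1; apply: val_inj; rewrite /= va0.
- by constructor 2; apply: val_inj; rewrite /= va1.
- by constructor 3; apply: val_inj; rewrite /= va2.
Qed.

Arguments fix_out {m j s}.
Arguments in3 {m i}.

Lemma mem6 m : [/\ (1%g : {perm 'I_m.+3}) \in [:: 1%g; cy m; cy2 m; t01 m; t12 m; t02 m],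
  cy m \in [:: 1%g; cy m; cy2 m; t01 m; t12 m; t02 m],
  cy2 m \in [:: 1%g; cy m; cy2 m; t01 m; t12 m; t02 m],
  t01 m \in [:: 1%g; cy m; cy2 m; t01 m; t12 m; t02 m] &
  [/\ t12 m \in [:: 1%g; cy m; cy2 m; t01 m; t12 m; t02 m] &
  t02 m \in [:: 1%g; cy m; cy2 m; t01 m; t12 m; t02 m]]].
Proof. by split; [| | | |split]; rewrite !inE eqxx ?orbT. Qed.

Lemma zsum (R : realFieldType) m (t : Defs.coord m.+3) :
  zvec R _ 1%g t + zvec R _ (cy m) t + zvec R _ (cy2 m) t =
  zvec R _ (t01 m) t + zvec R _ (t12 m) t + zvec R _ (t02 m) t.
Proof.
case: t => [[[i j] /= hij] f]; rewrite !ffunE /=.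
move: [set (val f).1; (val f).2] => F.
have [M1 M2 M3 M4 [M5 M6]] := mem6 m.
have E := (e01 m, e02 m, e12 m, e10 m, e20 m, e21 m).
have C01 : [set a1 m; a0 m] = [set a0 m; a1 m] by rewrite setUC.
have C02 : [set a2 m; a0 m] = [set a0 m; a2 m] by rewrite setUC.
have C12 : [set a2 m; a1 m] = [set a1 m; a2 m] by rewrite setUC.
case: (leqP 3 j) => hj.
  have fj := @fix_out m j _ hj.
  rewrite !fj //.
  case: (leqP 3 i) => hi.
    by rewrite !(fix_out hi).
  case: (in3 hi) => ->; evp; do 4 rewrite ?eqxx ?E ?tpE; ring.
have hi := ltn_trans hij hj.
case: (in3 hj) hij => ->; case: (in3 hi) => -> //=;
  rewrite ?va0 ?va1 ?va2 // => _; evp; do 4 rewrite ?eqxx ?E ?tpE; rewrite ?C01 ?C02 ?C12. all: try ring.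
all: move: (if [set a0 m; a1 m] == F then _ else _) (if [set a0 m; a2 m] == F then _ else _) (if [set a1 m; a2 m] == F then _ else _) => x y z; ring.
Qed.

Lemma conv_pt (R : realFieldType) n (I : finType) (f : I -> {ffun Defs.coord n -> R}) i : conv R n I f (f i).
Proof.
exists (fun k => if k == i then 1 else 0); split.
- by move=> k; case: (k == i); rewrite ?ler01 ?lexx.
- by rewrite -big_mkcond big_pred1_eq.
- by move=> t; rewrite (bigD1 i) //= eqxx mul1r big1 ?addr0 // => k /negbTE ->; rewrite mul0r.
Qed.

Arguments conv_pt {R n I} f i.

Lemma neqset (T : finType) (x : T) (A B : {set T}) : x \notin A -> x \in B -> (A == B) = false.
Proof. by move=> h1 h2; apply/negbTE; apply/eqP => H; rewrite H h2 in h1. Qed.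

Theorem mainTheorem4 (R : realFieldType) (n : nat) (hn : (3 <= n)%N) :
  exists s1 s2 s3 : {perm 'I_n},
    [/\ zvec R n s1 != zvec R n s2, zvec R n s1 != zvec R n s3,
        zvec R n s2 != zvec R n s3 &
        ~ is_face R n (convphi R n)
            (conv R n 'I_3 (fun i : 'I_3 => zvec R n (if val i == 0%N then s1
                                             else if val i == 1%N then s2 else s3)))].
Proof.
case: n hn => [|[|[|m]]] // _.
exists 1%g, (cy m), (cy2 m).
have E := (e01 m, e02 m, e12 m, e10 m, e20 m, e21 m).
have C01 : [set a1 m; a0 m] = [set a0 m; a1 m] by rewrite setUC.
have C02 : [set a2 m; a0 m] = [set a0 m; a2 m] by rewrite setUC.
have C12 : [set a2 m; a1 m] = [set a1 m; a2 m] by rewrite setUC.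
have N1 : ([set a0 m; a2 m] == [set a0 m; a1 m]) = false.
  by apply: (@neqset _ (a1 m)); rewrite !inE ?E ?eqxx ?orbT.
have N2 : ([set a1 m; a2 m] == [set a0 m; a1 m]) = false.
  by apply: (@neqset _ (a0 m)); rewrite !inE ?E ?eqxx ?orbT.
have N3 : ([set a0 m; a2 m] == [set a1 m; a2 m]) = false.
  by apply: (@neqset _ (a1 m)); rewrite !inE ?E ?eqxx ?orbT.
have N4 : ([set a0 m; a1 m] == [set a1 m; a2 m]) = false.
  by apply: (@neqset _ (a2 m)); rewrite !inE ?E ?eqxx ?orbT.
have lt01 : (a0 m < a1 m)%N by rewrite va0 va1.
have lt02 : (a0 m < a2 m)%N by rewrite va0 va2.
have lt12 : (a1 m < a2 m)%N by rewrite va1 va2.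
pose ed01 : edge m.+3 := exist _ (a0 m, a1 m) lt01.
pose ed02 : edge m.+3 := exist _ (a0 m, a2 m) lt02.
pose ed12 : edge m.+3 := exist _ (a1 m, a2 m) lt12.
pose k1 : Defs.coord m.+3 := (ed01, ed01).
pose k2 : Defs.coord m.+3 := (ed02, ed12).
have V : forall s, zvec R _ s k1 = if [set s (a0 m); s (a1 m)] == [set a0 m; a1 m] then 1 else 0.
  by move=> s; rewrite ffunE.
have W : forall s, zvec R _ s k2 = if [set s (a0 m); s (a2 m)] == [set a1 m; a2 m] then 1 else 0.
  by move=> s; rewrite ffunE.
have zid1 : zvec R _ 1%g k1 = 1 by rewrite V !perm1 eqxx.
have zcy1 : zvec R _ (cy m) k1 = 0.
  by rewrite V; evp; do 4 rewrite ?eqxx ?E ?tpE; rewrite ?C01 ?C02 ?C12 ?N1 ?N2 ?N3 ?N4.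
have zcy21 : zvec R _ (cy2 m) k1 = 0.
  by rewrite V; evp; do 4 rewrite ?eqxx ?E ?tpE; rewrite ?C01 ?C02 ?C12 ?N1 ?N2 ?N3 ?N4.
have zt1 : zvec R _ (t01 m) k1 = 1.
  by rewrite V; evp; do 4 rewrite ?eqxx ?E ?tpE; rewrite ?C01 ?C02 ?C12 ?eqxx.
have zid2 : zvec R _ 1%g k2 = 0 by rewrite W !perm1 N3.
have zcy2 : zvec R _ (cy m) k2 = 1.
  by rewrite W; evp; do 4 rewrite ?eqxx ?E ?tpE; rewrite ?C01 ?C02 ?C12 ?eqxx.
have zcy22 : zvec R _ (cy2 m) k2 = 0.
  by rewrite W; evp; do 4 rewrite ?eqxx ?E ?tpE; rewrite ?C01 ?C02 ?C12 ?N1 ?N2 ?N3 ?N4.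
have zt2 : zvec R _ (t01 m) k2 = 1.
  by rewrite W; evp; do 4 rewrite ?eqxx ?E ?tpE; rewrite ?C01 ?C02 ?C12 ?eqxx.
split.
- apply/eqP => H; move/ffunP: H => /(_ k1); rewrite zid1 zcy1 => /eqP.
  by rewrite oner_eq0.
- apply/eqP => H; move/ffunP: H => /(_ k1); rewrite zid1 zcy21 => /eqP.
  by rewrite oner_eq0.
- apply/eqP => H; move/ffunP: H => /(_ k2); rewrite zcy2 zcy22 => /eqP.
  by rewrite oner_eq0.
move=> [c [d [Hle Hiff]]].
have D1 : dotp R _ c (zvec R _ 1%g) = d.
  exact: (proj2 ((Hiff (zvec R _ 1%g)).1 (conv_pt (fun i : 'I_3 => zvec R m.+3 (if val i == 0%N then 1%g else if val i == 1%N then cy m else cy2 m)) (ord0 : 'I_3)))).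
have D2 : dotp R _ c (zvec R _ (cy m)) = d.
  exact: (proj2 ((Hiff (zvec R _ (cy m))).1 (conv_pt (fun i : 'I_3 => zvec R m.+3 (if val i == 0%N then 1%g else if val i == 1%N then cy m else cy2 m)) (Ordinal (isT : (1 < 3)%N))))).
have D3 : dotp R _ c (zvec R _ (cy2 m)) = d.
  exact: (proj2 ((Hiff (zvec R _ (cy2 m))).1 (conv_pt (fun i : 'I_3 => zvec R m.+3 (if val i == 0%N then 1%g else if val i == 1%N then cy m else cy2 m)) (Ordinal (isT : (2 < 3)%N))))).
have P1 := Hle _ (conv_pt (fun s : {perm 'I_m.+3} => zvec R _ s) (t01 m)).
have P2 := Hle _ (conv_pt (fun s : {perm 'I_m.+3} => zvec R _ s) (t12 m)).
have P3 := Hle _ (conv_pt (fun s : {perm 'I_m.+3} => zvec R _ s) (t02 m)).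
have S : dotp R _ c (zvec R _ 1%g) + dotp R _ c (zvec R _ (cy m)) + dotp R _ c (zvec R _ (cy2 m))
  = dotp R _ c (zvec R _ (t01 m)) + dotp R _ c (zvec R _ (t12 m)) + dotp R _ c (zvec R _ (t02 m)).
  by rewrite /dotp -!big_split; apply: eq_bigr => t _ /=; rewrite -!mulrDr zsum.
have D4 : dotp R _ c (zvec R _ (t01 m)) = d by simpl in P1, P2, P3; lra.
have [lam [lpos lsum lx]] := (Hiff _).2 (conj (conv_pt (fun s : {perm 'I_m.+3} => zvec R _ s) (t01 m)) D4).
have := lx k2; have := lx k1; move: lsum.
rewrite !big_ord_recl big_ord0 /=.
rewrite zt1 zid1 zcy1 zcy21 zt2 zid2 zcy2 zcy22.
have := lpos ord0; have := lpos (lift ord0 ord0); have := lpos (lift ord0 (lift ord0 ord0)).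
move=> p1 p2 p3 hs h1 h2; rewrite !big_ord0 in h1 h2; clear -p1 p2 p3 hs h1 h2; lra.
Qed.
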